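(* In the idealized setting described in the context, the PAIR framework uses at most $O(\lvert\mathcal S\rvert^2\log D)$ samples (rolled-out trajectories) to learn a policy $\pi$ such that $s\xrightarrow{\pi}g$ for every state $s$ and every goal $g$ reachable from $s$ (i.e. with $d(s,g)<\infty$).
   Context: Setting: a goal-conditioned Markov decision process with finite state space $\mathcal S$, finite action set $\mathcal A$, deterministic transitions, goal space $\mathcal G=\mathcal S$, and sparse reward $r(s,a,g)=\mathbb I\{s=g\}$. A policy is $\pi(a|s,g)$. Write $s\xrightarrow{\pi} g$ if, starting at $s_0=s$ and choosing $a_i\sim\pi(\cdot|s_i,g)$, $s_{i+1}\sim P(\cdot|s_i,a_i)$, the goal $g$ is reached with probability $1$. Let $d(s,s')$ be the minimum $t$ such that some policy reaches $s_t=s'$ from $s_0=s$ with probability $1$ ($+\infty$ if none), and $D=\max\{d(s,s'):d(s,s')<\infty\}$. Assumptions: the initial policy satisfies: if $P(s'|s,a)=1$ then $\pi^{(0)}(a|s,g=s')=1$. In each iteration every state-goal pair $(s,g)\in\mathcal S\times\mathcal S$ is sampled at least once and only a constant number of times. Idealized PAIR iteration $k$: for each pair $(s,g)$, roll out $\pi^{(k-1)}$ from $s$ toward $g$; if it succeeds the trajectory is added to the dataset; otherwise task reduction selects a subgoal $s'$ maximizing $V(s,s')\cdot V(s',g)$, where $V$ is the goal-conditioned value function (equal to $1$ exactly on pairs $(x,y)$ with $x\xrightarrow{\pi^{(k-1)}}y$), executes $\pi^{(k-1)}(\cdot|\cdot,s')$ from $s$ and then $\pi^{(k-1)}(\cdot|\cdot,g)$,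 and adds the resulting successful trajectory from $s$ to $g$ if any. The supervised learning step then produces $\pi^{(k)}$ with $s\xrightarrow{\pi^{(k)}}g$ for every pair $(s,g)$ for which the dataset contains a successful trajectory from $s$ to $g$. *)

(* Defs.v *)
From mathcomp Require Import all_boot all_order all_algebra.
From mathcomp Require Import reals.
Set Implicit Arguments. Unset Strict Implicit. Unset Printing Implicit Defensive.
Import Order.TTheory GRing.Theory Num.Theory.
Local Open Scope ring_scope.

(* A goal-conditioned MDP with finite state space S, finite action set A and
   deterministic transitions step : S -> A -> S, i.e. P(s'|s,a) = [step s a == s'].
   Goal space = S, reward r(s,a,g) = [s == g].
   A policy pi is represented as pi x g a = pi(a | x, g). *)

Section MDP.
Variables (R : realType) (S A : finType) (step : S -> A -> S).

Definition is_policy (pi : S -> S -> A -> R) : Prop :=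
  forall x g, (forall a, 0 <= pi x g a) /\ \sum_(a : A) pi x g a = 1.

(* probability that the rollout of pi(.|.,g) started at x has visited g
   within the first t steps (time 0 included) *)
Fixpoint hit_prob (pi : S -> S -> A -> R) (g : S) (t : nat) (x : S) : R :=
  match t with
  | 0 => if x == g then 1 else 0
  | t'.+1 => if x == g then 1
             else \sum_(a : A) pi x g a * hit_prob pi g t' (step x a)
  end.

(* s --pi--> g : the goal g is reached with probability 1, i.e. the
   (nondecreasing) probabilities of reaching g within t steps tend to 1. *)
Definition reaches (pi : S -> S -> A -> R) (s g : S) : Prop :=
  forall eps : R, 0 < eps -> exists t, 1 - eps < hit_prob pi g t s.

(* distribution of s_t when rolling out pi(.|.,g) from s_0 = s *)
Fixpoint state_dist (pi : S -> S -> A -> R) (g : S) (s : S) (t : nat) (y : S) : R :=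
  match t with
  | 0 => if y == s then 1 else 0
  | t'.+1 => \sum_(x : S) state_dist pi g s t' x *
               \sum_(a : A) pi x g a * (if step x a == y then 1 else 0)
  end.

Definition reach_at (s s' : S) (t : nat) : Prop :=
  exists pi, is_policy pi /\ state_dist pi s' s t s' = 1.

Definition is_dist (s s' : S) (t : nat) : Prop :=
  reach_at s s' t /\ forall t', (t' < t)%N -> ~ reach_at s s' t'.

Definition dist_finite (s s' : S) : Prop := exists t, reach_at s s' t.

Definition is_diameter (D : nat) : Prop :=
  (exists s s', is_dist s s' D) /\ (forall s s' t, is_dist s s' t -> (t <= D)%N).

End MDP.

(* Main.v *)
Require Import Defs.
From mathcomp Require Import all_boot all_order all_algebra.
From mathcomp Require Import reals.
From mathcomp Require Import ring lra zify.
From Stdlib Require Import Classical.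
Set Implicit Arguments. Unset Strict Implicit.
Import Order.TTheory GRing.Theory Num.Theory.
Local Open Scope ring_scope.

Section Helpers.
Variables (R : realType) (S A : finType) (step : S -> A -> S).

Definition pathn (n : nat) (s g : S) : Prop :=
  exists as_ : seq A, size as_ = n /\ foldl step s as_ = g.

Lemma sd_zero (pi : S -> S -> A -> R) g s t y :
  ~ pathn t s y -> state_dist step pi g s t y = 0.
Proof.
elim: t y => [|t IH] y Hn /=.
  case: eqP => // ys; exfalso; apply: Hn; exists [::]; by rewrite ys.
apply: big1 => x _.
case: (classic (pathn t s x)) => [[as_ [Hs Hf]]|Hx].
  rewrite big1 ?mulr0 // => a _.
  case: eqP => [Ha|_]; last by rewrite mulr0.
  exfalso; apply: Hn; exists (rcons as_ a).
  by rewrite size_rcons Hs foldl_rcons Hf.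
by rewrite IH // mul0r.
Qed.

Lemma reach_at_path s g t : reach_at R step s g t -> pathn t s g.
Proof.
move=> [pi [_ H]]; apply: NNPP => Hn.
move: H; rewrite (@sd_zero pi) //; move=> /eqP; by rewrite eq_sym oner_eq0.
Qed.

Lemma reaches_refl (pi : S -> S -> A -> R) s : reaches step pi s s.
Proof. move=> e he; exists 0%N => /=; rewrite eqxx; lra. Qed.

Lemma reaches_step (pi : S -> S -> A -> R) s a :
  is_policy pi -> pi s (step s a) a = 1 -> reaches step pi s (step s a).
Proof.
move=> Hp H1 e he; case: (eqVneq s (step s a)) => [E|ne].
  by rewrite -E in H1 *; apply: reaches_refl.
exists 1%N => /=; rewrite (negbTE ne).
have -> : \sum_(b : A) pi s (step s a) b * (if step s b == step s a then 1 else 0)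
   = 1 + \sum_(b | b != a) pi s (step s a) b * (if step s b == step s a then 1 else 0).
  by rewrite (bigD1 a) //= eqxx H1 mulr1.
have : 0 <= \sum_(b | b != a) pi s (step s a) b * (if step s b == step s a then 1 else 0).
  apply: sumr_ge0 => b _; apply: mulr_ge0; first by case: (Hp s (step s a)) => h _; apply: h.
  by case: ifP.
lra.
Qed.

Lemma dist_path D s g : is_diameter R step D -> dist_finite R step s g ->
  exists n, (n <= D)%N /\ pathn n s g.
Proof.
move=> [_ HD] [t Ht].
elim/ltn_ind: t Ht => t IH Ht.
case: (classic (exists t', (t' < t)%N /\ reach_at R step s g t')) => [[t' [lt Hr]]|Hno].
  exact: IH lt Hr.
exists t; split; last exact: reach_at_path.
apply: (HD s g); split=> // t' lt Hr; apply: Hno; by exists t'.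
Qed.

End Helpers.

Theorem lemmaA2 (c : nat) :
  exists C : nat,
  forall (R : realType) (S A : finType) (step : S -> A -> S) (D : nat)
    (pol : nat -> S -> S -> A -> R)
    (V : nat -> S -> S -> R) (sub : nat -> S -> S -> S)
    (nsamp ntraj : nat -> S -> S -> nat) (Data : nat -> S -> S -> Prop),
    @is_diameter R S A step D ->
    (forall k, is_policy (pol k)) ->
    (* initial policy: if P(s'|s,a) = 1 then pi0(a|s,g=s') = 1 *)
    (forall s a, pol 0%N s (step s a) a = 1) ->
    (* each pair sampled at least once and at most c times per iteration *)
    (forall k s g, (1 <= nsamp k s g <= c)%N) ->
    (* each sample rolls out the policy, and possibly the task-reduced rollout *)
    (forall k s g, (ntraj k s g <= 2 * nsamp k s g)%N) ->
    (* goal-conditioned value function of pi^(k) *)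
    (forall k x y, 0 <= V k x y <= 1) ->
    (forall k x y, V k x y = 1 <-> reaches step (pol k) x y) ->
    (* task reduction: subgoal maximizing V(s,s') * V(s',g) *)
    (forall k s g s', V k s s' * V k s' g <= V k s (sub k s g) * V k (sub k s g) g) ->
    (* successful direct rollouts are added to the dataset *)
    (forall k s g, reaches step (pol k) s g -> Data k s g) ->
    (* successful task-reduced rollouts are added to the dataset *)
    (forall k s g, reaches step (pol k) s (sub k s g) ->
                   reaches step (pol k) (sub k s g) g -> Data k s g) ->
    (* supervised learning step *)
    (forall k s g, Data k s g -> reaches step (pol k.+1) s g) ->
    exists K : nat,
      (forall s g, @dist_finite R S A step s g -> reaches step (pol K) s g) /\
      (\sum_(k < K) \sum_(s : S) \sum_(g : S) ntraj k s g
         <= C * #|S| ^ 2 * up_log 2 D)%N.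
Proof.
exists (2 * c)%N => R S A step D pol V sub nsamp ntraj Data HD Hpol H0 Hns Hnt
  HV HV1 Hsub _ Hred Hsl.
have key : forall k s g n, (n <= 2 ^ k)%N -> pathn step n s g -> reaches step (pol k) s g.
  elim=> [|k IH] s g n Hn [as_ [Hs Hf]].
    case: n Hn Hs => [|[|n]] // _ Hs.
      by case: as_ Hs Hf => //= _ <-; apply: reaches_refl.
    case: as_ Hs Hf => [|a [|b l]] //= _ <-; exact: reaches_step.
  set m := minn n (2 ^ k).
  have H1 : reaches step (pol k) s (foldl step s (take m as_)).
    apply: (IH _ _ m); first exact: geq_minr.
    by exists (take m as_); rewrite size_take Hs /m; split=> //; case: ltnP => h;
      [rewrite minnE; apply/eqP; rewrite eqn_leq; apply/andP; split; lia|
       rewrite minnE; lia].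
  have H2 : reaches step (pol k) (foldl step s (take m as_)) g.
    apply: (IH (foldl step s (take m as_)) g (n - m)%N); first by rewrite /m; rewrite expnS in Hn; lia.
    exists (drop m as_); by rewrite size_drop Hs -foldl_cat cat_take_drop.
  apply: Hsl; apply: Hred.
    set x := foldl step s (take m as_) in H1 H2.
    have Hx1 := (proj2 (HV1 k s x) H1); have Hx2 := (proj2 (HV1 k x g) H2).
    have := Hsub k s g x; rewrite Hx1 Hx2 mulr1.
    have /andP[a1 a2] := HV k s (sub k s g); have /andP[b1 b2] := HV k (sub k s g) g.
    move=> Hp; apply/HV1; nra.
  set x := foldl step s (take m as_) in H1 H2.
  have Hx1 := (proj2 (HV1 k s x) H1); have Hx2 := (proj2 (HV1 k x g) H2).
  have := Hsub k s g x; rewrite Hx1 Hx2 mulr1.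
  have /andP[a1 a2] := HV k s (sub k s g); have /andP[b1 b2] := HV k (sub k s g) g.
  move=> Hp; apply/HV1; nra.
exists (up_log 2 D); split.
  move=> s g Hf; have [n [Hn Hp]] := dist_path HD Hf.
  apply: (key _ _ _ n) Hp; apply: leq_trans Hn (up_logP _ _) => //.
have Hb : forall k, (\sum_(s : S) \sum_(g : S) ntraj k s g <= #|S| * (#|S| * (2 * c)))%N.
  move=> k; apply: (@leq_trans (\sum_(s : S) \sum_(g : S) (2 * c))%N).
    apply: leq_sum => s _; apply: leq_sum => g _; have := Hnt k s g; have := Hns k s g; lia.
  rewrite (eq_bigr (fun _ => #|S| * (2 * c))%N) ?sum_nat_const // => s _; by rewrite sum_nat_const.
apply: (@leq_trans (\sum_(k < up_log 2 D) (#|S| * (#|S| * (2 * c))))%N).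
  by apply: leq_sum => k _; apply: Hb.
rewrite sum_nat_const card_ord; apply: eq_leq; ring.
Qed.
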